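(* Let $\ell$ and $m$ be positive integers with $2\le\ell<m$ and let $G$ be a torsion-free abelian group written multiplicatively. Then there is no sequence $\mathcal{A}=(A_1,\dots,A_m)$ of finite subsets of $G$ satisfying simultaneously: $|A_i|\ge2$ for each $i\in[1,m]$; $|\{a\in A:\mu_{\mathcal{A}}(a)\ge2\}|\le 1$; and \[ |\Pi^{\ell}(\mathcal{A})|=\sum_{a\in A}\mu_{\mathcal{A}}(a)-\ell+1, \] where $A=A_1\cup\cdots\cup A_m$.
   Context: $\chi_S$ is the indicator function of $S$; $\mu_{\mathcal{A}}(a)=\min\big(\ell,\sum_{j=1}^m\chi_{A_j}(a)\big)$ for $a\in A$. $\Pi^{\ell}(\mathcal{A})$ is the set of all products $a_{i_1}\cdots a_{i_\ell}$ with $i_1,\dots,i_\ell\in[1,m]$ pairwise distinct and $a_{i_j}\in A_{i_j}$. *)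

(* Defs.v *)
From HB Require Import structures.
From mathcomp Require Import all_boot all_order all_algebra.
From mathcomp Require Import finmap.
Set Implicit Arguments. Unset Strict Implicit. Unset Printing Implicit Defensive.
Import Order.TTheory GRing.Theory Num.Theory.
Local Open Scope fset_scope.
Local Open Scope ring_scope.

(* The abelian group G is written additively (zmodType); the paper's
   product a_{i_1} ... a_{i_l} is the sum a_{i_1} + ... + a_{i_l}. *)

Definition torsion_free (G : zmodType) : Prop :=
  forall (x : G) (n : nat), (0 < n)%N -> x *+ n = 0 -> x = 0.

Definition unionA (G : zmodType) (m : nat) (A : 'I_m -> {fset G}) : {fset G} :=
  \bigcup_(i <- enum 'I_m) A i.

Definition muA (G : zmodType) (l m : nat) (A : 'I_m -> {fset G}) (a : G) : nat :=
  minn l (\sum_(j < m) (a \in A j : nat))%N.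

Definition in_PiA (G : zmodType) (l m : nat) (A : 'I_m -> {fset G}) (g : G) : Prop :=
  exists (i : 'I_l -> 'I_m) (a : 'I_l -> G),
    injective i /\ (forall j, a j \in A (i j)) /\ g = \sum_(j < l) a j.

(* Main.v *)
Require Import Defs.
From HB Require Import structures.
From mathcomp Require Import all_boot all_order all_algebra.
From mathcomp Require Import finmap.
From Stdlib Require Import Classical.
From mathcomp Require Import zify.
Import Order.TTheory GRing.Theory Num.Theory.
Set Implicit Arguments. Unset Strict Implicit. Unset Printing Implicit Defensive.
Local Open Scope fset_scope.
Local Open Scope ring_scope.

Section Comb.
Variable G : zmodType.
Implicit Types (As R : seq {fset G}) (B C D : {fset G}).

Fixpoint Pi As (k : nat) : {fset G} :=
  match As with
  | [::] => if k is 0%N then [fset (0 : G)] else fset0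
  | B :: As' => if k is k'.+1 then [fset b + s | b in B, s in Pi As' k'] `|` Pi As' k
                else [fset (0:G)]
  end.

Lemma Pi0 As g : (g \in Pi As 0) = (g == 0).
Proof. by case: As => [|B As] /=; rewrite inE. Qed.

Lemma PiS B As k g : g \in Pi (B :: As) k.+1 <->
  ((exists b s, [/\ b \in B, s \in Pi As k & g = b + s]) \/ g \in Pi As k.+1).
Proof.
rewrite /= in_fsetU; split.
  case/orP => [/imfset2P [b bB [s sP ->]]|->]; last by right.
  by left; exists b, s.
case=> [[b [s [bB sP ->]]]|->]; last by rewrite orbT.
by apply/orP; left; apply/imfset2P; exists b => //; exists s.
Qed.

Definition U As : {fset G} := \bigcup_(B <- As) B.
Definition cnt (a : G) As : nat := (\sum_(B <- As) (a \in B : nat))%N.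

Lemma U_cons B As a : (a \in U (B :: As)) = (a \in B) || (a \in U As).
Proof. by rewrite /U big_cons in_fsetU. Qed.

Lemma U_cat As1 As2 a : (a \in U (As1 ++ As2)) = (a \in U As1) || (a \in U As2).
Proof. by rewrite /U big_cat in_fsetU. Qed.

Lemma U_nil a : (a \in U [::]) = false.
Proof. by rewrite /U big_nil inE. Qed.

Lemma cnt_cons a B As : cnt a (B :: As) = ((a \in B) + cnt a As)%N.
Proof. by rewrite /cnt big_cons. Qed.

Lemma cnt_cat a As1 As2 : cnt a (As1 ++ As2) = (cnt a As1 + cnt a As2)%N.
Proof. by rewrite /cnt big_cat. Qed.

Lemma U_cnt a As : (a \in U As) = (0 < cnt a As)%N.
Proof.
elim: As => [|B As IH]; first by rewrite U_nil /cnt big_nil.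
by rewrite U_cons cnt_cons IH; case: (a \in B).
Qed.

Lemma Pi1 As g : g \in Pi As 1 = (g \in U As).
Proof.
elim: As => [|B As IH]; first by rewrite U_nil /= inE.
apply/idP/idP.
  move/PiS => [[b [s [bB]]]|]; last by rewrite IH U_cons orbC => ->.
  by rewrite Pi0 => /eqP -> ->; rewrite addr0 U_cons bB.
rewrite U_cons => /orP [gB|gU]; apply/PiS; last by right; rewrite IH.
by left; exists g, 0; rewrite Pi0 addr0.
Qed.

Lemma Pi_rem As1 B As2 k b s : b \in B -> s \in Pi (As1 ++ As2) k ->
  b + s \in Pi (As1 ++ B :: As2) k.+1.
Proof.
move=> bB; elim: As1 k s => [|C As1 IH] k s /=.
  by move=> sP; apply/PiS; left; exists b, s.
case: k => [|k].
  rewrite inE => /eqP ->; apply/PiS; right; apply: IH; by rewrite Pi0.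
move/PiS => [[c [s' [cC s'P ->]]]|sP]; apply/PiS; last by right; apply: IH.
left; exists c, (b + s'); split => //; first exact: IH.
by rewrite addrCA.
Qed.

Lemma Pi_sub As1 B As2 k g : g \in Pi (As1 ++ As2) k -> g \in Pi (As1 ++ B :: As2) k.
Proof.
elim: As1 k g => [|C As1 IH] k g /=.
  by case: k => [|k]; [rewrite Pi0 => /eqP ->; rewrite inE | move=> gP; apply/PiS; right].
case: k => [//|k].
move/PiS => [[c [s' [cC s'P ->]]]|sP]; apply/PiS; last by right; apply: IH.
by left; exists c, s'; split => //; apply: IH.
Qed.


Lemma has_split (p : pred {fset G}) As : has p As ->
  exists As1 B As2, As = As1 ++ B :: As2 /\ p B.
Proof.
elim: As => [//|C As IH] /= /orP [pC|/IH [As1 [B [As2 [-> pB]]]]].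
  by exists [::], C, As.
by exists (C :: As1), B, As2.
Qed.

Lemma inU_has a As : (a \in U As) = has (fun B => a \in B) As.
Proof. by elim: As => [|B As IH]; rewrite ?U_nil ?U_cons ?IH. Qed.

Lemma sub_U B As : B \in As -> {subset B <= U As}.
Proof.
move=> BA a aB; rewrite inU_has; apply/hasP; by exists B.
Qed.

Lemma Pi_subl As1 B As2 k : {subset Pi (As1 ++ As2) k <= Pi (As1 ++ B :: As2) k}.
Proof. by move=> g; apply: Pi_sub. Qed.

Lemma Pi_ne As k : (forall B, B \in As -> B != fset0) -> (k <= size As)%N ->
  exists g, g \in Pi As k.
Proof.
elim: As k => [|B As IH] [|k] //= hB hk; try by exists 0; rewrite inE.
have /fset0Pn [b bB] := hB B (mem_head _ _).
have [s sP] := IH k (fun C CA => hB C (@mem_behead _ (B :: As) C CA)) hk.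
by exists (b + s); apply/PiS; left; exists b, s.
Qed.

Variable lt : G -> G -> Prop.
Hypothesis lt_irr : forall x, ~ lt x x.
Hypothesis lt_trans : forall x y z, lt x y -> lt y z -> lt x z.
Hypothesis lt_add : forall x y z, lt x y -> lt (x + z) (y + z).

Definition tot (X : {fset G}) := forall a b, a \in X -> b \in X -> a = b \/ lt a b \/ lt b a.

Lemma seq_max (r : G -> G -> Prop) (s : seq G) :
  (forall x y z, r x y -> r y z -> r x z) ->
  (forall a b, a \in s -> b \in s -> a = b \/ r a b \/ r b a) -> s != [::] ->
  exists2 M, M \in s & forall y, y \in s -> y = M \/ r y M.
Proof.
move=> rt; elim: s => [//|a s IH] ht _.
case: (altP (s =P [::])) => [->|sn].
  by exists a; rewrite ?mem_head // => y; rewrite inE => /eqP ->; left.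
have mb : forall z, z \in s -> z \in a :: s by move=> z zs; rewrite inE zs orbT.
have [M Ms HM] := IH (fun x y xs ys => ht x y (mb x xs) (mb y ys)) sn.
have [e|[aM|Ma]] := ht a M (mem_head _ _) (mb M Ms).
- exists M; first exact: mb.
  by move=> y; rewrite inE => /orP [/eqP ->|/HM]; [left|].
- exists M; first exact: mb.
  by move=> y; rewrite inE => /orP [/eqP ->|/HM]; [right|].
- exists a; first exact: mem_head.
  move=> y; rewrite inE => /orP [/eqP ->|/HM [->|yM]]; [left|right|right] => //.
  exact: rt yM Ma.
Qed.

Lemma fset_max (X : {fset G}) : tot X -> X != fset0 ->
  exists2 M, M \in X & forall y, y \in X -> y = M \/ lt y M.
Proof.
move=> ht Xn; apply: seq_max => //.
Qed.

Lemma fset_min (X : {fset G}) : tot X -> X != fset0 ->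
  exists2 t, t \in X & forall y, y \in X -> y = t \/ lt t y.
Proof.
move=> ht Xn; apply: (@seq_max (fun a b => lt b a)).
- by move=> x y z h1 h2; apply: lt_trans h2 h1.
- move=> a b ha hb; have [->|[h|h]] := ht a b ha hb; by [left|right;right|right;left].
by [].
Qed.

Lemma KL As1 B As2 k M t (Z : {fset G}) :
  M \in B -> t \in Pi (As1 ++ As2) k ->
  (forall y, y \in Pi (As1 ++ As2) k -> y = t \/ lt t y) ->
  (forall z, z \in Z -> lt z M /\ z + t \in Pi (As1 ++ B :: As2) k.+1) ->
  (#|` Z| + #|` Pi (As1 ++ As2) k| <= #|` Pi (As1 ++ B :: As2) k.+1|)%N.
Proof.
move=> MB tY tmin hZ.
set Y := Pi (As1 ++ As2) k; set P := Pi _ k.+1.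
have e1 : #|` [fset z + t | z in Z]| = #|` Z|.
  by rewrite card_in_imfset //= => x y _ _ /addIr.
have e2 : #|` [fset M + y | y in Y]| = #|` Y|.
  by rewrite card_in_imfset //= => x y _ _ /addrI.
rewrite -e1 -e2 -cardfsUI.
have -> : [fset z + t | z in Z] `&` [fset M + y | y in Y] = fset0.
  apply/fsetP => g; rewrite in_fsetI inE; apply/negbTE/negP => /andP [].
  move=> /imfsetP [z /= zZ ->] /imfsetP [y /= yY].
  have [zM _] := hZ z zZ; have h1 := lt_add t zM.
  have h2 : lt (z + t) (M + y).
    case: (tmin y yY) => [->|ty]; first exact: h1.

    apply: lt_trans h1 _; rewrite (addrC M t) (addrC M y); exact: lt_add.
  by move=> e; rewrite e in h2; apply: (lt_irr h2).
rewrite cardfs0 addn0; apply: fsubset_leq_card; apply/fsubsetP => g.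
rewrite in_fsetU => /orP [/imfsetP [z /= zZ ->]|/imfsetP [y /= yY ->]].
  by case: (hZ z zZ).
exact: Pi_rem.
Qed.


Definition Mul As := [fset a in U As | (2 <= cnt a As)%N].

Lemma card_sep (V : {fset G}) (p : pred G) :
  #|` [fset a in V | p a]| = (\sum_(a <- V) (p a : nat))%N.
Proof. by rewrite card_fset_sum1 -big_fset_condE big_mkcond. Qed.


Lemma card_sub_sum (V X : {fset G}) : X `<=` V ->
  #|` X| = (\sum_(a <- V) (a \in X : nat))%N.
Proof.
move=> XV; rewrite card_fset_sum1.
rewrite -(big_fset_incl _ (F := fun a => (a \in X : nat)) XV); last first.
  by move=> x _ /negbTE ->.
by rewrite big_seq_cond [RHS]big_seq_cond; apply: eq_bigr => i /andP [-> _].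
Qed.

Lemma CL As1 B As2 k : (2 <= k)%N ->
  (\sum_(a <- U (As1 ++ B :: As2)) minn k (cnt a (As1 ++ B :: As2)) <=
   #|` B| + \sum_(a <- U (As1 ++ As2)) minn k.-1 (cnt a (As1 ++ As2)) +
   #|` [fset a in U (As1 ++ B :: As2) | (a \notin B) && (2 <= cnt a (As1 ++ B :: As2))%N]|)%N.
Proof.
move=> k1; set V := U (As1 ++ B :: As2).
have BV : B `<=` V.
  by apply/fsubsetP => a aB; rewrite /V U_cat U_cons aB orbT.
have RV : U (As1 ++ As2) `<=` V.
  by apply/fsubsetP => a; rewrite /V !U_cat U_cons => /orP [->|->]; rewrite ?orbT.
rewrite card_sep (card_sub_sum BV).
rewrite (big_fset_incl _ RV); last first.
  by move=> x _; rewrite U_cnt lt0n negbK => /eqP ->; rewrite minn0.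
rewrite -!big_split /=; apply: leq_sum => a _.
rewrite !cnt_cat cnt_cons; case: (a \in B) => /=; case: k k1 => [//|k] k1 /=;
rewrite ?addn0 ?add0n; move: (cnt a As1) (cnt a As2) => x y;
  [lia | case: ltnP => h2; rewrite ?addn1 ?addn0; lia].
Qed.


Lemma card_le1 (X : {fset G}) a b : (#|` X| <= 1)%N -> a \in X -> b \in X -> a = b.
Proof.
move=> h aX bX; apply/eqP; apply: contraTT h => nab.
have sub : [fset a; b] `<=` X.
  by apply/fsubsetP => z; rewrite !inE => /orP [/eqP ->|/eqP ->].
by have := fsubset_leq_card sub; rewrite cardfs2 nab -ltnNge.
Qed.

Lemma U_sub As1 B As2 a : a \in U (As1 ++ As2) -> a \in U (As1 ++ B :: As2).
Proof. by rewrite !U_cat U_cons => /orP [->|->]; rewrite ?orbT. Qed.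

Lemma cnt_sub As1 B As2 a : (cnt a (As1 ++ As2) <= cnt a (As1 ++ B :: As2))%N.
Proof. by rewrite !cnt_cat cnt_cons; lia. Qed.

Lemma Mul_sub As1 B As2 : (#|` Mul (As1 ++ As2)| <= #|` Mul (As1 ++ B :: As2)|)%N.
Proof.
apply: fsubset_leq_card; apply/fsubsetP => a; rewrite !inE /= => /andP [aU ca].
by rewrite U_sub //=; apply: leq_trans ca (cnt_sub _ _ _ _).
Qed.

Lemma mem_sub As1 B As2 C : C \in As1 ++ As2 -> C \in As1 ++ B :: As2.
Proof. by rewrite !mem_cat inE => /orP [->|->]; rewrite ?orbT. Qed.

Lemma tot_sub (X Y : {fset G}) : {subset X <= Y} -> tot Y -> tot X.
Proof. by move=> XY hY a b aX bX; apply: hY; apply: XY. Qed.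

Lemma decomp_mul As : As != [::] -> (#|` Mul As| <= 1)%N ->
  exists As1 B As2, As = As1 ++ B :: As2 /\ (forall a, a \in Mul As -> a \in B).
Proof.
move=> An hM; case: (fset_0Vmem (Mul As)) => [e|[x xM]].
  case: As An hM e => [//|B As2] _ _ e; exists [::], B, As2; split => // a.
  by rewrite e inE.
have := xM; rewrite inE /= => /andP [xU _]; rewrite inU_has in xU.
have [As1 [B [As2 [eA xB]]]] := has_split xU.
exists As1, B, As2; split => // a aM.
by rewrite (card_le1 hM aM xM).
Qed.

Definition main_stmt k := forall As, (k < size As)%N ->
  (forall B, B \in As -> 2 <= #|` B|)%N -> (#|` Mul As| <= 1)%N ->
  (forall j, (j <= k)%N -> tot (Pi As j)) ->
  (\sum_(a <- U As) minn k (cnt a As) + 2 <= #|` Pi As k| + k)%N.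

Lemma step k : (2 <= k)%N -> main_stmt k -> main_stmt k.+1.
Proof.
move=> k2 IH As hs hB hM ht.
have An : As != [::] by move: hs; case: (As).
have [As1 [B [As2 [eA hBM]]]] := decomp_mul An hM.
subst As; set R := As1 ++ As2.
have hsR : (k < size R)%N by move: hs; rewrite !size_cat /=; lia.
have hBR : forall C, C \in R -> (2 <= #|` C|)%N by move=> C CR; apply: hB; apply: mem_sub.
have hMR : (#|` Mul R| <= 1)%N by apply: leq_trans hM; apply: Mul_sub.
have htR : forall j, (j <= k)%N -> tot (Pi R j).
  move=> j jk; apply: (tot_sub (@Pi_subl As1 B As2 j)); apply: ht; lia.
have IHR := IH R hsR hBR hMR htR.
have BU : {subset B <= Pi (As1 ++ B :: As2) 1}.
  by move=> a aB; rewrite Pi1 U_cat U_cons aB orbT.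
have totB : tot B by apply: (tot_sub BU); apply: ht.
have Bn : B != fset0.
  have := hB B; rewrite mem_cat mem_head orbT => /(_ isT).
  by apply: contraTneq => ->; rewrite cardfs0.
have [M MB Mmax] := fset_max totB Bn.
have totY : tot (Pi R k) by apply: htR.
have [g gY] : exists g, g \in Pi R k.
  apply: Pi_ne; last by lia.
  by move=> C /hBR; apply: contraTneq => ->; rewrite cardfs0.
have Yn : Pi R k != fset0 by apply/fset0Pn; exists g.
have [t tY tmin] := fset_min totY Yn.
have hKL := @KL As1 B As2 k M t (B `\ M) MB tY tmin.
have hZ : forall z, z \in B `\ M -> lt z M /\ z + t \in Pi (As1 ++ B :: As2) k.+1.
  move=> z; rewrite in_fsetD1 => /andP [zM zB]; split; last exact: Pi_rem.
  by case: (Mmax z zB) => // e; rewrite e eqxx in zM.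
have {hKL hZ} hKL := hKL hZ.
have eB := cardfsD1 M B; rewrite MB /= in eB.
have hCL := @CL As1 B As2 k.+1 (leqW k2).
have e0 : #|` [fset a in U (As1 ++ B :: As2) | (a \notin B) &&
             (2 <= cnt a (As1 ++ B :: As2))%N]| = 0%N.
  apply/eqP; rewrite cardfs_eq0; apply/eqP/fsetP => a; rewrite !inE /=.
  apply/negbTE; apply/negP => /andP [aU /andP [aB ca]].
  by move: aB; rewrite hBM // inE /=; apply/andP; split.
rewrite e0 addn0 /= in hCL.
rewrite /R in IHR.
move: IHR hCL hKL eB.
set S1 := \sum_(a <- U (As1 ++ As2)) _.
set S2 := \sum_(a <- U (As1 ++ B :: As2)) _.
set x1 := #|` Pi (As1 ++ As2) k|.
set x2 := #|` Pi (As1 ++ B :: As2) k.+1|.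
set x3 := #|` B `\ M|.
set x4 := #|` B|.
lia.
Qed.


Lemma pick_D R t : (2 <= size R)%N -> t \in U R ->
  exists R1 D R2, R = R1 ++ D :: R2 /\ t \in U (R1 ++ R2).
Proof.
case: R => [|C0 [|C1 R']] //= _; rewrite !U_cons.
case tC0: (t \in C0) => /= h.
  by exists [:: C0], C1, R'; rewrite /= U_cons tC0.
by exists [::], C0, (C1 :: R'); rewrite /= U_cons.
Qed.

Lemma PiU R : Pi R 1 = U R.
Proof. by apply/fsetP => g; rewrite Pi1. Qed.

Lemma base : main_stmt 2.
Proof.
move=> As hs hB hM ht.
have totU : tot (U As) by rewrite -PiU; apply: ht.
have Un : U As != fset0.
  case: As hs hB {ht totU hM} => [//|C As] _ hB.
  have := hB C (mem_head _ _); have /fset0Pn [c cC] : C != fset0.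
    by apply: contraTneq (hB C (mem_head _ _)) => ->; rewrite cardfs0.
  by move=> _; apply/fset0Pn; exists c; rewrite U_cons cC.
have [M MU Mmax] := fset_max totU Un.
have [As1 [B [As2 [eA MB]]]] : exists As1 B As2, As = As1 ++ B :: As2 /\ M \in B.
  by apply: has_split; rewrite -inU_has.
subst As; set R := As1 ++ As2.
have hsR : (1 < size R)%N by move: hs; rewrite !size_cat /=; lia.
have hBR : forall C, C \in R -> (2 <= #|` C|)%N by move=> C CR; apply: hB; apply: mem_sub.
have totY : tot (Pi R 1).
  by apply: (tot_sub (@Pi_subl As1 B As2 1)); apply: ht.
have [g gY] : exists g, g \in Pi R 1.
  apply: Pi_ne; last by lia.
  by move=> C /hBR; apply: contraTneq => ->; rewrite cardfs0.
have Yn : Pi R 1 != fset0 by apply/fset0Pn; exists g.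
have [t tY tmin] := fset_min totY Yn.
have tU : t \in U R by rewrite -Pi1.
have [R1 [D [R2 [eR tR12]]]] := pick_D hsR tU.
have DR : D \in R by rewrite eR mem_cat mem_head orbT.
have hD : forall y, y \in D -> y + t \in Pi (As1 ++ B :: As2) 2.
  move=> y yD; apply: Pi_sub; rewrite -/R eR; apply: Pi_rem => //.
  by rewrite Pi1.
have DU : forall y, y \in D -> y \in U (As1 ++ B :: As2).
  by move=> y yD; apply: U_sub; rewrite -/R inU_has; apply/hasP; exists D.
set Z := (B `\ M) `|` (D `\` B).
have hKL := @KL As1 B As2 1 M t Z MB tY tmin.
have hZ : forall z, z \in Z -> lt z M /\ z + t \in Pi (As1 ++ B :: As2) 2.
  move=> z; rewrite in_fsetU in_fsetD1 in_fsetD => /orP [/andP [zM zB]|/andP [zB zD]].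
    split; last exact: Pi_rem.
    have zU : z \in U (As1 ++ B :: As2) by rewrite U_cat U_cons zB orbT.
    by case: (Mmax z zU) => // e; rewrite e eqxx in zM.
  split; last exact: hD.
  case: (Mmax z (DU z zD)) => // e; by rewrite e MB in zB.
have {hKL hZ} hKL := hKL hZ.
have eZ : #|` Z| = (#|` B `\ M| + #|` D `\` B|)%N.
  rewrite /Z -cardfsUI.
  have -> : (B `\ M) `&` (D `\` B) = fset0.
    apply/fsetP => z; rewrite in_fsetI in_fsetD1 in_fsetD inE.
    by case: (z \in B); rewrite /= ?andbF.
  by rewrite cardfs0 addn0.
have eB := cardfsD1 M B; rewrite MB /= in eB.
have eD := cardfsID B D.
have D2 := hBR D DR.
set E := [fset a in U (As1 ++ B :: As2) | (a \notin B) && (2 <= cnt a (As1 ++ B :: As2))%N].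
have hDE : (#|` D `&` B| + #|` E| <= 1)%N.
  rewrite -cardfsUI.
  have -> : (D `&` B) `&` E = fset0.
    apply/fsetP => z; rewrite in_fsetI in_fsetI inE /E !inE /=.
    by case: (z \in B); rewrite /= ?andbF.
  rewrite cardfs0 addn0; apply: leq_trans hM; apply: fsubset_leq_card.
  apply/fsubsetP => z; rewrite in_fsetU in_fsetI /E !inE /=.
  case/orP => [/andP [zD zB]|/andP [-> /andP [_ ->]]] //.
  rewrite (DU z zD) /= cnt_cat cnt_cons zB.
  have : (0 < cnt z R)%N.
    by rewrite -U_cnt inU_has; apply/hasP; exists D.
  have -> : (true + cnt z As2 = (cnt z As2).+1)%N by [].
  by rewrite /R cnt_cat addnS ltnS.
have hCL := @CL As1 B As2 2 (leqnn 2).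
have eS : (\sum_(a <- U R) minn 1 (cnt a R))%N = #|` Pi R 1|.
  rewrite PiU card_fset_sum1 big_seq [RHS]big_seq; apply: eq_bigr => a.
  by rewrite U_cnt => h; apply/minn_idPl.
rewrite /= -/R eS in hCL.
move: hCL hKL eZ eB eD D2 hDE.
set S2 := \sum_(a <- U (As1 ++ B :: As2)) _.
set x1 := #|` Pi R 1|.
set x2 := #|` Pi (As1 ++ B :: As2) 2|.
set x3 := #|` B `\ M|.
set x4 := #|` B|.
set x5 := #|` D `\` B|.
set x6 := #|` D `&` B|.
set x7 := #|` D|.
set x8 := #|` E|.
set x9 := #|` Z|.
lia.
Qed.


Lemma main k : (2 <= k)%N -> main_stmt k.
Proof.
elim: k => [//|k IH] hk.
case: (leqP k 1) => hk1.
  have -> : k = 1%N by lia.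
  exact: base.
by apply: step => //; apply: IH.
Qed.

End Comb.

Section Cone.
Variable G : zmodType.
Hypothesis tf : torsion_free G.

Definition cone (P : G -> Prop) :=
  [/\ ~ P 0, (forall x y, P x -> P y -> P (x + y)) &
      (forall x n, (0 < n)%N -> P (x *+ n) -> P x)].

Lemma cone_mul P x n : cone P -> P x -> (0 < n)%N -> P (x *+ n).
Proof.
case=> _ hadd _ Px; elim: n => [//|[|n] IH] _; first by rewrite mulr1n.
by rewrite mulrS; apply: hadd => //; apply: IH.
Qed.

Lemma cone_ext P d : cone P -> exists P', [/\ cone P', (forall y, P y -> P' y) &
   (d = 0 \/ P' d \/ P' (- d))].
Proof.
move=> cP.
case: (classic (d = 0 \/ P d \/ P (- d))) => [h|h].
  by exists P.
have [d0 [Pd Pnd]] : d <> 0 /\ ~ P d /\ ~ P (- d) by tauto.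
have [P0 hadd hiso] := cP.
pose P' y := exists k n, (0 < k)%N /\ (P (y *+ k - d *+ n) \/ (y *+ k = d *+ n /\ (0 < n)%N)).
exists P'; split.
- split.
  + move=> [k [n [k0 [h1|[h1 n0]]]]].
      rewrite mul0rn sub0r -mulNrn in h1.
      case: n h1 => [|n] h1; first by rewrite mulr0n in h1.
      by apply: Pnd; apply: (hiso _ n.+1).
    by apply: d0; apply: (tf n0); rewrite -h1 mul0rn.
  + move=> x y [k1 [n1 [k10 h1]]] [k2 [n2 [k20 h2]]].
    exists (k1 * k2)%N, (n1 * k2 + n2 * k1)%N; split; first by rewrite muln_gt0 k10.
    have e : (x + y) *+ (k1 * k2) - d *+ (n1 * k2 + n2 * k1) =
             (x *+ k1 - d *+ n1) *+ k2 + (y *+ k2 - d *+ n2) *+ k1.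
      rewrite mulrnDl mulrnDr !mulrnBl -!mulrnA [(k2 * k1)%N]mulnC.
      by rewrite opprD addrACA.
    rewrite e.
    case: h1 => [h1|[h1 n10]]; case: h2 => [h2|[h2 n20]].
    * by left; apply: hadd; apply: cone_mul.
    * have -> : y *+ k2 - d *+ n2 = 0 by apply/eqP; rewrite subr_eq0; apply/eqP.
      by left; rewrite mul0rn addr0; apply: cone_mul.
    * have -> : x *+ k1 - d *+ n1 = 0 by apply/eqP; rewrite subr_eq0; apply/eqP.
      by left; rewrite mul0rn add0r; apply: cone_mul.
    * have e1 : x *+ k1 - d *+ n1 = 0 by apply/eqP; rewrite subr_eq0; apply/eqP.
      have e2 : y *+ k2 - d *+ n2 = 0 by apply/eqP; rewrite subr_eq0; apply/eqP.
      right; split.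
        by apply/eqP; rewrite -subr_eq0 e e1 e2 !mul0rn addr0.
      by rewrite addn_gt0 muln_gt0 n10 k20.
  + move=> x n n0 [k [m [k0 h1]]].
    exists (n * k)%N, m; split; first by rewrite muln_gt0 n0.
    by rewrite mulrnA.
- move=> y Py; exists 1%N, 0%N; split => //; left.
  by rewrite mulr1n mulr0n subr0.
- right; left; exists 1%N, 1%N; split => //; right.
  by rewrite mulr1n.
Qed.

Lemma cone_list (L : seq G) : exists P, cone P /\
  (forall d, d \in L -> d = 0 \/ P d \/ P (- d)).
Proof.
elim: L => [|d L [P [cP hP]]].
  exists (fun _ => False); split => //; split => //.
have [P' [cP' PP' hd]] := cone_ext d cP.
exists P'; split => // e; rewrite inE => /orP [/eqP ->//|/hP [->|[h|h]]].
- by left.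
- by right; left; apply: PP'.
- by right; right; apply: PP'.
Qed.

End Cone.

Section Top.
Variable G : zmodType.

Lemma Pi_witness (m : nat) (A : 'I_m -> {fset G}) (i0 : 'I_m) (s : seq 'I_m) k g :
  uniq s -> g \in Pi [seq A i | i <- s] k ->
  exists (ix : seq 'I_m) (xs : seq G), [/\ size ix = k, size xs = k, uniq ix,
    {subset ix <= s} & (forall j, (j < k)%N -> nth 0 xs j \in A (nth i0 ix j))] /\
    g = \sum_(x <- xs) x.
Proof.
elim: s k g => [|i s IH] k g /=.
  case: k => [|k] _; last by rewrite inE.
  rewrite inE => /eqP ->; exists [::], [::]; split; [by split | by rewrite big_nil].
move=> /andP [iNs us].
case: k => [|k].
  rewrite inE => /eqP ->; exists [::], [::]; split; [by split | by rewrite big_nil].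
move/PiS => [[b [s0 [bA s0P ->]]]|gP].
  have [ix [xs [[h1 h2 h3 h4 h5] h6]]] := IH k s0 us s0P.
  exists (i :: ix), (b :: xs); split; last by rewrite big_cons h6.
  split => /=; rewrite ?h1 ?h2 //.
  - by rewrite h3 andbT; apply: contra iNs; apply: h4.
  - by move=> j; rewrite !inE => /orP [->|/h4 ->]; rewrite ?orbT.
  - by case=> [|j] //= jk; apply: h5.
have [ix [xs [[h1 h2 h3 h4 h5] h6]]] := IH k.+1 g us gP.
exists ix, xs; split => //; split => //.
by move=> j /h4 js; rewrite inE js orbT.
Qed.

End Top.

Theorem theorem1p17 (G : zmodType) (l m : nat) :
  (2 <= l)%N -> (l < m)%N -> torsion_free G ->
  ~ exists A : 'I_m -> {fset G},
      (forall i, (2 <= #|` A i|)%N) /\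
      (#|` [fset a in unionA A | (2 <= muA l A a)%N]| <= 1)%N /\
      (exists P : {fset G},
          (forall g, g \in P <-> in_PiA l A g) /\
          (#|` P|%:Z = (\sum_(a <- unionA A) muA l A a)%N%:Z - l%:Z + 1)).
Proof.
move=> l2 lm tf [A [hA [hM [P [hP hcard]]]]].
have m0 : (0 < m)%N by lia.
pose i0 := Ordinal m0.
pose As0 := [seq A i | i <- enum 'I_m].
have eU : unionA A = U As0.
  rewrite /unionA /U /As0 big_map; reflexivity.
have ecnt : forall a, cnt a As0 = (\sum_(j < m) (a \in A j : nat))%N.
  by move=> a; rewrite /cnt big_map big_enum.
have eS : (\sum_(a <- unionA A) muA l A a)%N = (\sum_(a <- U As0) minn l (cnt a As0))%N.
  by rewrite eU; apply: eq_bigr => a _; rewrite /muA ecnt.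
have PiP : (#|` Pi As0 l| <= #|` P|)%N.
  apply: fsubset_leq_card; apply/fsubsetP => g gPi; apply/hP.
  have [ix [xs [[h1 h2 h3 h4 h5] h6]]] := Pi_witness i0 (enum_uniq 'I_m) gPi.
  exists (fun j => nth i0 ix j), (fun j => nth 0 xs j); split.
  - move=> j1 j2 /eqP; rewrite nth_uniq ?h1 //.
    by move=> /eqP e; apply/val_inj.
  split; first by move=> j; apply: h5.
  by rewrite h6 (big_nth 0) big_mkord h2.
pose L := flatten [seq [seq s - s' | s <- Pi As0 j, s' <- Pi As0 j] | j <- iota 0 l.+1].
have [C [[C0 Cadd Ciso] hC]] := cone_list tf L.
pose lt := fun x y : G => C (y - x).
have lt_irr : forall x, ~ lt x x by move=> x; rewrite /lt subrr.
have lt_trans : forall x y z, lt x y -> lt y z -> lt x z.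
  move=> x y z h1 h2; have := Cadd _ _ h2 h1; rewrite /lt.
  by rewrite addrA subrK.
have lt_add : forall x y z, lt x y -> lt (x + z) (y + z).
  by move=> x y z; rewrite /lt opprD addrACA subrr addr0.
have htot : forall j, (j <= l)%N -> tot lt (Pi As0 j).
  move=> j jl a b aP bP.
  have : b - a \in L.
    apply/flattenP; exists [seq s - s' | s <- Pi As0 j, s' <- Pi As0 j].
      by apply/mapP; exists j => //; rewrite mem_iota; lia.
    by apply/allpairsP; exists (b, a).
  move/hC => [e|[h|h]].
  - by left; apply/eqP; rewrite eq_sym -subr_eq0; apply/eqP.
  - by right; left.
  - by right; right; rewrite /lt -opprB.
have hs : (l < size As0)%N by rewrite size_map size_enum_ord.
have hB : forall B, B \in As0 -> (2 <= #|` B|)%N by move=> B /mapP [i _ ->].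
have hM0 : (#|` Mul As0| <= 1)%N.
  apply: leq_trans hM; apply: fsubset_leq_card; apply/fsubsetP => a.
  rewrite !inE /= -eU => /andP [aU ca]; rewrite aU /= /muA -ecnt.
  by rewrite leq_min l2.
have := main lt_irr lt_trans lt_add l2 hs hB hM0 htot.
rewrite -eS => hmain.
move: hcard hmain PiP; set Sg := (\sum_(a <- unionA A) muA l A a)%N.
move: Sg #|` P| #|` Pi As0 l| => Sg p q h1 h2 h3.
lia.
Qed.
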